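(* Let $n\ge1$ and let $v=\mathrm{id}_{S^n}: S^n\to S^n$. Then the fundamental action on $[S^n\times S^n, S^n]^v$ is trivial.
   Context: $[S^n\times S^n,S^n]^v$ denotes the set of homotopy classes, relative the diagonal $D=\Delta(S^n)\subset S^n\times S^n$, of maps $f: S^n\times S^n\to S^n$ with $f\circ\Delta = v$. The fundamental action of $\pi_{n+1}(S^n)\cong[\Sigma_\ast D,S^n]^v$ (pointed self-homotopies of $v$) on this set is defined by extending such a self-homotopy to a homotopy starting at a given map $f$, using the homotopy extension property of $D\rightarrowtail S^n\times S^n$, and taking the end map. *)

(* Defs.v *)
From HB Require Import structures.
From mathcomp Require Import all_boot all_order all_algebra.
From mathcomp Require Import all_classical all_reals all_analysis.
Unset Printing Implicit Defensive.
Import Order.TTheory GRing.Theory Num.Theory.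
Import numFieldNormedType.Exports.
Local Open Scope classical_set_scope.
Local Open Scope ring_scope.

(* Spaces are realized as subsets of Euclidean spaces with the subspace
   topology; a continuous map A -> B is a function on the ambient types that is
   continuous within A and sends A into B. *)

Definition sphere (R : realType) (n : nat) : set 'rV[R]_(n.+1) :=
  [set x | \sum_(i < n.+1) x ord0 i ^+ 2 = 1].

Definition sbase (R : realType) (n : nat) : 'rV[R]_(n.+1) :=
  \row_(i < n.+1) (i == ord0)%:R.

Definition unitI (R : realType) : set R := [set t | 0 <= t <= 1].

Definition cmap {T U : topologicalType} (A : set T) (B : set U) (f : T -> U) :=
  {within A, continuous f} /\ (forall a, A a -> B (f a)).

Definition SxS (R : realType) (n : nat) : set ('rV[R]_(n.+1) * 'rV[R]_(n.+1)) :=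
  (sphere R n) `*` (sphere R n).

Definition relmap {R : realType} {n : nat}
    (f : 'rV[R]_(n.+1) * 'rV[R]_(n.+1) -> 'rV[R]_(n.+1)) :=
  cmap (SxS R n) (sphere R n) f /\ (forall x, sphere R n x -> f (x, x) = x).

Definition relhomotopic {R : realType} {n : nat}
    (f g : 'rV[R]_(n.+1) * 'rV[R]_(n.+1) -> 'rV[R]_(n.+1)) :=
  exists G : ('rV[R]_(n.+1) * 'rV[R]_(n.+1)) * R -> 'rV[R]_(n.+1),
    [/\ cmap ((SxS R n) `*` (unitI R)) (sphere R n) G,
        (forall p, SxS R n p -> G (p, 0) = f p),
        (forall p, SxS R n p -> G (p, 1) = g p) &
        (forall x t, sphere R n x -> unitI R t -> G ((x, x), t) = x)].

(* pointed self-homotopy of v = id_{S^n} (a representative of an element of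
   [Sigma_* D, S^n]^v ~ pi_{n+1}(S^n)), D identified with S^n via Delta *)
Definition pself_homotopy {R : realType} {n : nat}
    (H : 'rV[R]_(n.+1) * R -> 'rV[R]_(n.+1)) :=
  [/\ cmap ((sphere R n) `*` (unitI R)) (sphere R n) H,
      (forall x, sphere R n x -> H (x, 0) = x),
      (forall x, sphere R n x -> H (x, 1) = x) &
      (forall t, unitI R t -> H (sbase R n, t) = sbase R n)].

(* Main.v *)
Require Import Defs.
From HB Require Import structures.
From mathcomp Require Import all_boot all_order all_algebra.
From mathcomp Require Import all_classical all_reals all_analysis.
From mathcomp Require Import ring lra.
Import Order.TTheory GRing.Theory Num.Theory.
Import numFieldNormedType.Exports.
Local Open Scope classical_set_scope.
Local Open Scope ring_scope.
Definition dot {R : realType} {n : nat} (a b : 'rV[R]_n.+1) : R :=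
  \sum_(i < n.+1) a ord0 i * b ord0 i.

Lemma cvg_coord {R : realType} {n : nat} {T : Type} (F : set_system T) {FF : Filter F}
  (u : T -> 'rV[R]_n.+1) (a : 'rV[R]_n.+1) i : u @ F --> a -> (u t ord0 i) @[t --> F] --> a ord0 i.
Proof. move=> ua; apply: (@continuous_cvg _ _ _ _ _ _ (fun M : 'rV[R]_n.+1 => M ord0 i)) => //; exact: coord_continuous. Qed.

Lemma cvg_dot {R : realType} {n : nat} {T : Type} (F : set_system T) {FF : Filter F}
  (u w : T -> 'rV[R]_n.+1) (a b : 'rV[R]_n.+1) : u @ F --> a -> w @ F --> b ->
  dot (u t) (w t) @[t --> F] --> dot a b.
Proof.
move=> ua wb; rewrite /dot.
apply: (@cvg_big _ _ +%R 0 xpredT) => //.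
  exact: add_continuous.
move=> i _; apply: cvgM; exact: cvg_coord.
Qed.

Lemma within_comp {T U W : topologicalType} (A : set T) (B : set U)
  (g : U -> W) (h : T -> U) (x : T) :
  A x -> (forall a, A a -> B (h a)) -> h @ within A (nbhs x) --> h x ->
  {within B, continuous g} ->
  (fun t => g (h t)) @ within A (nbhs x) --> g (h x).
Proof.
move=> Ax hAB hx cg.
have gc := (subspace_continuousP B g).1 cg (h x) (hAB x Ax).
apply: (cvg_comp h g _ gc) => P /= hW.
have := hx _ hW; rewrite !nbhs_filterE /within /=.
by apply: filterS => t H At; apply: H => //; exact: hAB.
Qed.

Lemma cvg_min {R : realType} {T : Type} (F : set_system T) {FF : Filter F}
  (u w : T -> R) (a b : R) : u @ F --> a -> w @ F --> b ->
  Num.min (u t) (w t) @[t --> F] --> Num.min a b.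
Proof.
move=> ua wb.
have H := @continuous_cvg _ _ _ F _ (fun t => (u t, w t)) (fun xy : R * R => Num.min xy.1 xy.2) (a, b) (@min_continuous _ R (a, b)) (cvg_pair ua wb).
exact: H.
Qed.

Lemma cvg_max {R : realType} {T : Type} (F : set_system T) {FF : Filter F}
  (u w : T -> R) (a b : R) : u @ F --> a -> w @ F --> b ->
  Num.max (u t) (w t) @[t --> F] --> Num.max a b.
Proof.
move=> ua wb.
have H := @continuous_cvg _ _ _ F _ (fun t => (u t, w t)) (fun xy : R * R => Num.max xy.1 xy.2) (a, b) (@max_continuous _ R (a, b)) (cvg_pair ua wb).
exact: H.
Qed.

Definition nrm {R : realType} {n : nat} (v : 'rV[R]_n.+1) : 'rV[R]_n.+1 :=
  (Num.sqrt (dot v v))^-1 *: v.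

Lemma cvg_nrm {R : realType} {n : nat} {T : Type} (F : set_system T) {FF : Filter F}
  (u : T -> 'rV[R]_n.+1) (a : 'rV[R]_n.+1) : 0 < dot a a -> u @ F --> a ->
  nrm (u t) @[t --> F] --> nrm a.
Proof.
move=> a0 ua; rewrite /nrm; apply: cvgZ => //.
apply: cvgV; first by rewrite sqrtr_eq0 -ltNge. 
apply: (@continuous_cvg _ _ _ _ _ (fun t => dot (u t) (u t)) Num.sqrt).
  exact: sqrt_continuous.
exact: cvg_dot.
Qed.

Lemma sphereE {R : realType} {n : nat} (x : 'rV[R]_n.+1) : sphere R n x <-> dot x x = 1.
Proof.
rewrite /sphere /dot /=; split => <-; apply: eq_bigr => i _; by rewrite expr2.
Qed.

Lemma dotC {R : realType} {n : nat} (a b : 'rV[R]_n.+1) : dot a b = dot b a.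
Proof. by apply: eq_bigr => i _; rewrite mulrC. Qed.

Lemma dot_ge0 {R : realType} {n : nat} (a : 'rV[R]_n.+1) : 0 <= dot a a.
Proof. by apply: sumr_ge0 => i _; rewrite -expr2 sqr_ge0. Qed.

Lemma dot_eq0 {R : realType} {n : nat} (a b : 'rV[R]_n.+1) : dot a a = 0 -> dot a b = 0.
Proof.
move=> /eqP; rewrite psumr_eq0; last by move=> i _; rewrite -expr2 sqr_ge0.
move=> /allP H; rewrite /dot big1 // => i _.
have := H i (mem_index_enum i); rewrite /= mulf_eq0 orbb => /eqP ->.
by rewrite mul0r.
Qed.

Lemma dot_lin {R : realType} {n : nat} (s t : R) (a b c : 'rV[R]_n.+1) :
  dot (s *: a + t *: b) c = s * dot a c + t * dot b c.
Proof.
rewrite /dot !mulr_sumr -big_split /=; apply: eq_bigr => i _.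
by rewrite !mxE mulrDl !mulrA.
Qed.

Lemma dotZ {R : realType} {n : nat} (s : R) (a b : 'rV[R]_n.+1) :
  dot (s *: a) b = s * dot a b.
Proof.
rewrite /dot mulr_sumr; apply: eq_bigr => i _; by rewrite !mxE mulrA.
Qed.

Lemma nrm_sphere {R : realType} {n : nat} (v : 'rV[R]_n.+1) : 0 < dot v v -> sphere R n (nrm v).
Proof.
move=> v0; apply/sphereE; rewrite /nrm dotZ dotC dotZ mulrA -expr2 exprVn sqr_sqrtr ?ltW //.
by rewrite mulVf // gt_eqF.
Qed.

Lemma nrm_unit {R : realType} {n : nat} (v : 'rV[R]_n.+1) : dot v v = 1 -> nrm v = v.
Proof. by move=> v1; rewrite /nrm v1 sqrtr1 invr1 scale1r. Qed.

Lemma lower_bound {R : realType} {T : topologicalType} (C : set T) (m : T -> R) :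
  compact C -> {within C, continuous m} -> (forall q, C q -> 0 < m q) ->
  exists2 e : R, 0 < e & forall q, C q -> e <= m q.
Proof.
move=> cC cm mpos.
have ch : {within C, continuous (fun q => (m q)^-1)}.
  apply/subspace_continuousP => q Cq.
  apply: cvgV; first by rewrite gt_eqF // mpos.
  exact: ((subspace_continuousP C m).1 cm q Cq).
have := compact_bounded (continuous_compact ch cC).
move=> [M0 [M0real HM0]].
have HM : globally [set (m q)^-1 | q in C] [set x0 | `|x0| <= `|M0| + 1].
  apply: HM0; apply: le_lt_trans (real_ler_norm M0real) _; by rewrite ltrDl ltr01.
set M := `|M0| + 1 in HM.
exists (1 + `|M|)^-1; first by rewrite invr_gt0 ltr_pwDl.
move=> q Cq; have hq := HM _ (ex_intro2 _ _ q Cq erefl).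
have mq := mpos q Cq.
rewrite -[leRHS](invrK) ler_pV2 ?inE ?unitfE ?invr_gt0 ?ltr_pwDl ?gt_eqF //=.
apply: le_trans (ler_norm _) _; apply: le_trans hq _.
  apply: ler_wpDl => //; exact: (real_ler_norm (num_real _)).
by rewrite invr_gt0.
Qed.

Lemma unitIE {R : realType} : unitI R = `[0, 1]%classic.
Proof. by apply/seteqP; split => x /=; rewrite in_itv. Qed.

Lemma sphere_closed {R : realType} {n : nat} : closed (sphere R n).
Proof.
have -> : sphere R n = (fun x : 'rV[R]_n.+1 => dot x x) @^-1` [set 1].
  by apply/seteqP; split => x /= /sphereE.
apply: preimage_closed; last exact: closed_eq.
move=> x _; exact: (@cvg_dot R n _ (nbhs x) _ id id x x cvg_id cvg_id).
Qed.

Lemma sphere_compact {R : realType} {n : nat} : compact (sphere R n).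
Proof.
have hc := @rV_compact R n.+1 (fun=> `[-1, 1]%classic) (fun=> @segment_compact R (-1) 1).
apply: (subclosed_compact sphere_closed hc).
move=> x /sphereE x1 i /=; rewrite in_itv /= -ler_norml.
have : x ord0 i ^+ 2 <= 1.
  rewrite -x1 /dot (bigD1 i) //= -expr2 lerDl; apply: sumr_ge0 => j _.
  by rewrite -expr2 sqr_ge0.
by rewrite -real_normK ?num_real // expr_le1 ?normr_ge0.
Qed.

Lemma dom_compact {R : realType} {n : nat} : compact (SxS R n `*` unitI R).
Proof.
rewrite unitIE; apply: compact_setX; last exact: segment_compact.
apply: compact_setX; exact: sphere_compact.
Qed.

Lemma cvg_wfst {T U : topologicalType} (D : set (T * U)) (q : T * U) :
  (fun t => t.1) @ within D (nbhs q) --> q.1.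
Proof. apply: cvg_within_filter; exact: cvg_fst. Qed.

Lemma cvg_wsnd {T U : topologicalType} (D : set (T * U)) (q : T * U) :
  (fun t => t.2) @ within D (nbhs q) --> q.2.
Proof. apply: cvg_within_filter; exact: cvg_snd. Qed.

Lemma cvg_wfst2 {T U V : topologicalType} (D : set ((T * U) * V)) (q : (T * U) * V) :
  (fun t => t.1.1) @ within D (nbhs q) --> q.1.1.
Proof.
apply: cvg_within_filter.
exact: (cvg_comp _ _ (@cvg_fst _ _ (nbhs q.1) (nbhs q.2) _) (@cvg_fst _ _ (nbhs q.1.1) (nbhs q.1.2) _)).
Qed.

Lemma cvg_wsnd2 {T U V : topologicalType} (D : set ((T * U) * V)) (q : (T * U) * V) :
  (fun t => t.1.2) @ within D (nbhs q) --> q.1.2.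
Proof.
apply: cvg_within_filter.
exact: (cvg_comp _ _ (@cvg_fst _ _ (nbhs q.1) (nbhs q.2) _) (@cvg_snd _ _ (nbhs q.1.1) (nbhs q.1.2) _)).
Qed.

Lemma dot_zero {R : realType} {n : nat} (a : 'rV[R]_n.+1) : dot a a = 0 -> a = 0.
Proof.
move=> /eqP; rewrite psumr_eq0; last by move=> i _; rewrite -expr2 sqr_ge0.
move=> /allP H; apply/rowP => i; rewrite mxE.
by have := H i (mem_index_enum i); rewrite /= mulf_eq0 orbb => /eqP.
Qed.

Lemma dot_sub {R : realType} {n : nat} (x y : 'rV[R]_n.+1) :
  dot (x - y) (x - y) = dot x x + dot y y - 2 * dot x y.
Proof.
rewrite /dot mulr_sumr.
transitivity (\sum_(i < n.+1) (x ord0 i * x ord0 i + y ord0 i * y ord0 i)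
   - \sum_(i < n.+1) 2 * (x ord0 i * y ord0 i)).
  rewrite -sumrB; apply: eq_bigr => i _; rewrite !mxE; ring.
by rewrite big_split.
Qed.

Lemma dot_lt1 {R : realType} {n : nat} (x y : 'rV[R]_n.+1) :
  sphere R n x -> sphere R n y -> x != y -> dot x y < 1.
Proof.
move=> /sphereE x1 /sphereE y1 xy; rewrite ltNge; apply/negP => h.
have : dot (x - y) (x - y) <= 0 by rewrite dot_sub x1 y1; lra.
move=> h2; have /dot_zero/eqP : dot (x - y) (x - y) = 0.
  by apply/eqP; rewrite eq_le h2 dot_ge0.
by rewrite subr_eq0 (negPf xy).
Qed.

Lemma clamp01 {R : realType} (z : R) : 0 <= Num.min 1 (Num.max 0 z) <= 1.
Proof.
apply/andP; split; last by rewrite ge_min lexx.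
by rewrite le_min ler01 le_max lexx.
Qed.
Arguments within_comp {T U W A B g h x}.

Theorem corollary4p5 (R : realType) (n : nat) (hn : (1 <= n)%N)
  (f : 'rV[R]_(n.+1) * 'rV[R]_(n.+1) -> 'rV[R]_(n.+1))
  (H : 'rV[R]_(n.+1) * R -> 'rV[R]_(n.+1))
  (F : ('rV[R]_(n.+1) * 'rV[R]_(n.+1)) * R -> 'rV[R]_(n.+1)) :
  relmap f ->
  pself_homotopy H ->
  cmap ((SxS R n) `*` (unitI R)) (sphere R n) F ->
  (forall p, SxS R n p -> F (p, 0) = f p) ->
  (forall x t, sphere R n x -> unitI R t -> F ((x, x), t) = H (x, t)) ->
  relhomotopic f (fun p => F (p, 1)).
Proof.
move=> [[fc fS] fD] [[Hc HS] H0 H1 Hb] [Fc FS] F0 FD.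
set Dom := SxS R n `*` unitI R.
pose m := fun q : ('rV[R]_n.+1 * 'rV[R]_n.+1) * R =>
  Num.max (1 - dot q.1.1 q.1.2) (dot (F q) (H (f q.1, q.2))).
have fcvg : forall q, Dom q -> (fun t => f t.1) @ within Dom (nbhs q) --> f q.1.
  move=> q Dq; apply: (within_comp Dq) => //; first by move=> a [].
  exact: cvg_wfst.
have mc : {within Dom, continuous m}.
  apply/subspace_continuousP => q Dq; apply: cvg_max.
    apply: cvgB; first exact: cvg_cst.
    exact: (@cvg_dot R n _ (within Dom (nbhs q)) _ _ _ _ _ (cvg_wfst2 Dom q) (cvg_wsnd2 Dom q)).
  apply: (@cvg_dot R n _ (within Dom (nbhs q)) _); first exact: ((subspace_continuousP Dom F).1 Fc q Dq).
  apply: (within_comp (B := sphere R n `*` unitI R) Dq) => //.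
    by move=> a [Sa Ia]; split => //; exact: fS.
  exact: (cvg_pair (fcvg q Dq) (cvg_wsnd Dom q)).
have mpos : forall q, Dom q -> 0 < m q.
  move=> [[x y] t] [[Sx Sy] It] /=; rewrite /m /=.
  have [<-|xy] := eqVneq x y.
    rewrite FD // fD // ((sphereE (H (x, t))).1 (HS (x, t) (conj Sx It))).
    by rewrite lt_max ltr01 orbT.
  by rewrite lt_max subr_gt0 dot_lt1.
have [e e0 me] := @lower_bound R _ Dom m dom_compact mc mpos.
pose c := fun p : 'rV[R]_n.+1 * 'rV[R]_n.+1 =>
  Num.min 1 (Num.max 0 ((dot p.1 p.2 - 1 + e) / e)).
pose al := fun q : ('rV[R]_n.+1 * 'rV[R]_n.+1) * R => Num.max (c q.1) (3 * q.2 - 2).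
pose be := fun q : ('rV[R]_n.+1 * 'rV[R]_n.+1) * R => Num.max (c q.1) (1 - 3 * q.2).
pose la := fun q : ('rV[R]_n.+1 * 'rV[R]_n.+1) * R => Num.min 1 (Num.max 0 (2 - 3 * q.2)).
pose a := fun q : ('rV[R]_n.+1 * 'rV[R]_n.+1) * R => F (q.1, al q).
pose b := fun q : ('rV[R]_n.+1 * 'rV[R]_n.+1) * R => H (f q.1, be q).
pose v := fun q : ('rV[R]_n.+1 * 'rV[R]_n.+1) * R => (1 - la q) *: a q + la q *: b q.
have c01 : forall p, 0 <= c p <= 1 := fun p => clamp01 _.
have la01 : forall q, 0 <= la q <= 1 := fun q => clamp01 _.
have al01 : forall q, Dom q -> unitI R (al q).
  move=> q [_ /andP [t0 t1]]; have /andP[c0 c1] := c01 q.1.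
  rewrite /unitI /= /al; apply/andP; split; first by rewrite le_max c0.
  by rewrite ge_max c1 /=; lra.
have be01 : forall q, Dom q -> unitI R (be q).
  move=> q [_ /andP [t0 t1]]; have /andP[c0 c1] := c01 q.1.
  rewrite /unitI /= /be; apply/andP; split; first by rewrite le_max c0.
  by rewrite ge_max c1 /=; lra.
have aS : forall q, Dom q -> sphere R n (a q).
  move=> q Dq; apply: FS; split; [exact: Dq.1 | exact: al01].
have bS : forall q, Dom q -> sphere R n (b q).
  move=> q Dq; apply: HS; split; [exact: fS Dq.1 | exact: be01].
have vpos : forall q, Dom q -> 0 < dot (v q) (v q).
  move=> q Dq; have /andP[l0 l1] := la01 q.
  have [la1|la1] := eqVneq (la q) 1.
    rewrite /v la1 subrr scale0r add0r scale1r.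
    by rewrite ((sphereE _).1 (bS q Dq)) ltr01.
  have key : 0 < dot (v q) (a q).
    rewrite /v dot_lin ((sphereE _).1 (aS q Dq)) mulr1.
    have [la0|la0] := eqVneq (la q) 0.
      by rewrite la0 mul0r addr0 subr0 ltr01.
    have hba : 0 <= dot (b q) (a q).
      case: Dq => [[Sx Sy] /andP[t0 t1]].
      have h2 : 0 < 2 - 3 * q.2.
        rewrite ltNge; apply/negP => h; move: la0; rewrite /la max_l //.
        by rewrite min_r ?ler01 // eqxx.
      have h3 : 2 - 3 * q.2 < 1.
        rewrite ltNge; apply/negP => h; move: la1; rewrite /la max_r ?ltW //.
        by rewrite min_l // eqxx.
      have /andP[c0 c1] := c01 q.1.
      have ale : al q = c q.1 by rewrite /al max_l //; apply: le_trans c0; lra.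
      have bee : be q = c q.1 by rewrite /be max_l //; apply: le_trans c0; lra.
      rewrite /a /b ale bee.
      have [c00|c00] := eqVneq (c q.1) 0.
        have fq := fS _ (conj Sx Sy).
        rewrite c00 F0; last by split.
        by rewrite H0 // ((sphereE _).1 fq) ler01.
      have cpos : 0 < c q.1 by rewrite lt_def c00 c0.
      have zpos : 0 < (dot q.1.1 q.1.2 - 1 + e) / e.
        rewrite ltNge; apply/negP => h; move: c00.
        by rewrite /c max_l // min_r ?ler01 // eqxx.
      have dxy : 1 - dot q.1.1 q.1.2 < e.
        have : 0 < dot q.1.1 q.1.2 - 1 + e by move: zpos; rewrite pmulr_lgt0 // invr_gt0.
        lra.
      have := me (q.1, c q.1) (conj (conj Sx Sy) (c01 q.1)).
      rewrite /m /= le_max leNgt dxy /= dotC => h.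
      exact: le_trans (ltW e0) h.
    have hp : 0 < 1 - la q by rewrite subr_gt0 lt_def eq_sym la1 l1.
    have := mulr_ge0 l0 hba; lra.
  rewrite lt_def dot_ge0 andbT; apply/eqP => h.
  by move: key; rewrite (dot_eq0 (v q) (a q) h) ltxx.
have Gc : {within Dom, continuous (fun q => nrm (v q))}.
  apply/subspace_continuousP => q Dq.
  set X := within Dom (nbhs q).
  have ccvg : c t.1 @[t --> X] --> c q.1.
    apply: (@cvg_min R _ X _ (fun=> 1)); first exact: cvg_cst.
    apply: (@cvg_max R _ X _ (fun=> 0)); first exact: cvg_cst.
    apply: (@cvgM _ _ X _ (fun t => dot t.1.1 t.1.2 - 1 + e) (fun=> e^-1)); last exact: cvg_cst.
    apply: (@cvgD _ _ _ X _ (fun t => dot t.1.1 t.1.2 - 1) (fun=> e)); last exact: cvg_cst.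
    apply: (@cvgB _ _ _ X _ (fun t => dot t.1.1 t.1.2) (fun=> 1)); last exact: cvg_cst.
    exact: (@cvg_dot R n _ X _ _ _ _ _ (cvg_wfst2 Dom q) (cvg_wsnd2 Dom q)).
  have tcvg : (fun t : ('rV[R]_n.+1 * 'rV[R]_n.+1) * R => 3 * t.2) @ X --> 3 * q.2.
    apply: (@cvgM _ _ X _ (fun=> 3) (fun t => t.2)); first exact: cvg_cst.
    exact: cvg_wsnd.
  have alc : al t @[t --> X] --> al q.
    apply: (@cvg_max R _ X _ _ _ _ _ ccvg).
    apply: (@cvgB _ _ _ X _ (fun t => 3 * t.2) (fun=> 2)); last exact: cvg_cst.
    exact: tcvg.
  have bec : be t @[t --> X] --> be q.
    apply: (@cvg_max R _ X _ _ _ _ _ ccvg).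
    apply: (@cvgB _ _ _ X _ (fun=> (1:R)) (fun t => 3 * t.2)); first exact: cvg_cst.
    exact: tcvg.
  have lac : la t @[t --> X] --> la q.
    apply: (@cvg_min R _ X _ (fun=> 1)); first exact: cvg_cst.
    apply: (@cvg_max R _ X _ (fun=> 0)); first exact: cvg_cst.
    apply: (@cvgB _ _ _ X _ (fun=> (2:R)) (fun t => 3 * t.2)); first exact: cvg_cst.
    exact: tcvg.
  have ac : a t @[t --> X] --> a q.
    apply: (@within_comp _ _ _ Dom Dom F (fun t => (t.1, al t)) q Dq) => //.
      by move=> t Dt; split; [exact: Dt.1 | exact: al01].
    exact: (cvg_pair (cvg_wfst Dom q) alc).
  have bc : b t @[t --> X] --> b q.
    apply: (@within_comp _ _ _ Dom (sphere R n `*` unitI R) H (fun t => (f t.1, be t)) q Dq) => //.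
      by move=> t Dt; split; [exact: fS Dt.1 | exact: be01].
    exact: (cvg_pair (fcvg q Dq) bec).
  apply: (@cvg_nrm R n _ X _ _ _ (vpos q Dq)).
  apply: (@cvgD _ _ _ X _ (fun t => (1 - la t) *: a t) (fun t => la t *: b t)).
    apply: (@cvgZ _ _ _ X _ (fun t => 1 - la t) a); last exact: ac.
    apply: (@cvgB _ _ _ X _ (fun=> (1:R)) la); first exact: cvg_cst.
    exact: lac.
  exact: (@cvgZ _ _ _ X _ la b _ _ lac bc).
have cdiag : forall x, sphere R n x -> c (x, x) = 1.
  move=> x /sphereE x1; rewrite /c /= x1 subrr add0r mulfV ?gt_eqF //.
  by rewrite max_r ?ler01 // min_l.
exists (fun q => nrm (v q)); split.
- split; first exact: Gc.
  by move=> q Dq; apply: nrm_sphere; exact: vpos.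
- move=> p Sp.
  have lae : la (p, 0) = 1.
    by rewrite /la /= mulr0 subr0 max_r ?ler0n // min_l // ler1n.
  have bee : be (p, 0) = 1.
    have /andP[_ c1] := c01 p.
    by rewrite /be /= mulr0 subr0 max_r.
  rewrite /v lae subrr scale0r add0r scale1r /b bee /= H1; last exact: fS.
  by rewrite nrm_unit //; apply/sphereE; exact: fS.
- move=> p Sp.
  have lae : la (p, 1) = 0.
    rewrite /la /= mulr1 max_l ?min_r //; lra.
  have ale : al (p, 1) = 1.
    have /andP[_ c1] := c01 p.
    by rewrite /al /= mulr1 max_r //; lra.
  rewrite /v lae subr0 scale0r addr0 scale1r /a ale /=.
  rewrite nrm_unit //; apply/sphereE; apply: FS; split => //.
  by rewrite /unitI /= ler01 lexx.
- move=> x t Sx It.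
  have ale : al ((x, x), t) = 1.
    move: It => /andP[t0 t1].
    by rewrite /al cdiag // max_l // /=; lra.
  have bee : be ((x, x), t) = 1.
    move: It => /andP[t0 t1].
    by rewrite /be cdiag // max_l // /=; lra.
  have Ix : unitI R 1 by rewrite /unitI /= ler01 lexx.
  rewrite /v /a /b ale bee /= FD // fD // H1 //.
  by rewrite -scalerDl subrK scale1r nrm_unit //; apply/sphereE.
Qed.
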